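(* Let $a,b\in\mathbb{Z}$ with $a^2-b^2\neq 0$, and let $G$ be the finite abelian group presented by the matrix $\begin{pmatrix} a & b\\ b & a\end{pmatrix}$, i.e. $G=\mathbb{Z}^2/\operatorname{im}\begin{pmatrix} a & b\\ b & a\end{pmatrix}$. Then either $G$ has an element of order $16$, or in the canonical decomposition of $G$ both the number of summands isomorphic to $\mathbb{Z}_2$ and the number of summands isomorphic to $\mathbb{Z}_4$ are even.
   Context: The canonical decomposition of a finite abelian group is its unique decomposition as a direct sum of cyclic groups of prime-power orders. *)

(* Defs.v *)
From HB Require Import structures.
From mathcomp Require Import all_boot all_order all_algebra all_fingroup all_solvable.
Set Implicit Arguments. Unset Strict Implicit. Unset Printing Implicit Defensive.
Import GRing.Theory.

(* G (a subgroup of a finite group gT) is presented by the integer matrix M,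
   i.e. G is isomorphic to Z^2 / im M : there is a group homomorphism
   phi : Z^2 -> gT (Z^2 as integer column vectors) onto G whose kernel is
   exactly the image (column lattice) of M. *)
Definition presented_by (M : 'M[int]_2) (gT : finGroupType) (G : {set gT}) :=
  exists phi : 'cV[int]_2 -> gT,
    [/\ (forall u v, phi (u + v)%R = (phi u * phi v)%g),
        (forall u, phi u \in G),
        (forall x, x \in G -> exists u, phi u = x) &
        (forall u, phi u = 1%g <-> exists z : 'cV[int]_2, u = (M *m z)%R)].

Definition canonical_decomposition (gT : finGroupType) (G : {group gT})
    (s : seq {group gT}) :=
  (\big[dprod/1]_(H <- s) H)%g = G /\
  (forall H, H \in s -> cyclic H /\ exists p k, prime p /\ #|H| = (p ^ k.+1)%N).

Definition num_summands (gT : finGroupType) (s : seq {group gT}) (n : nat) :=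
  count (fun H : {group gT} => #|H| == n) s.

Definition Mab (a b : int) : 'M[int]_2 :=
  \matrix_(i < 2, j < 2) (if i == j then a else b).

(* Main.v *)
Require Import Defs.
From HB Require Import structures.
From mathcomp Require Import all_boot all_order all_algebra all_fingroup all_solvable.
From mathcomp Require Import zify ring.
Set Implicit Arguments. Unset Strict Implicit. Unset Printing Implicit Defensive.
Import GRing.Theory Num.Theory.


Lemma unit_int (x : int) : x \is a GRing.unit -> `|x|%N = 1%N.
Proof. move=> ux; have : (x == 1)%R || (x == -1)%R := ux. by case/orP=> /eqP ->. Qed.

Lemma count_eqS (T : Type) (f : T -> nat) k (s : seq T) :
  (count (fun x => f x == k.+1) s + count (fun x => k.+1 < f x) s
   = count (fun x => k < f x) s)%N.
Proof.
elim: s => //= x s IH.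
case: (ltngtP (f x) k.+1) => h /=; try lia.
Qed.

Lemma logn2_pp p k : prime p ->
  logn 2 (p ^ k.+1) = if p == 2 then k.+1 else 0%N.
Proof.
move=> pp; rewrite lognX logn_prime //.
by have [_|_] := eqVneq p 2; rewrite ?muln1 ?muln0.
Qed.

Lemma pp_eq2pow p k j : prime p -> (0 < j)%N ->
  (p ^ k.+1 == 2 ^ j)%N = (p == 2) && (k.+1 == j).
Proof.
move=> pp j0; case: (eqVneq p 2) => [->|ne] /=; first by rewrite eqn_exp2l.
apply/negbTE/eqP => h.
have : (2 %| p ^ k.+1)%N by rewrite h; case: (j) j0 => // j' _; rewrite expnS dvdn_mulr.
rewrite Euclid_dvdX // andbT dvdn_prime2 // => /eqP h2.
by rewrite h2 eqxx in ne.
Qed.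

Lemma pp_card_eq p k j : prime p -> (0 < j)%N ->
  (p ^ k.+1 == 2 ^ j)%N = (logn 2 (p ^ k.+1) == j).
Proof.
move=> pp j0; rewrite pp_eq2pow // logn2_pp //; case: eqP => //= _.
by case: j j0.
Qed.



Section B.
Variable gT : finGroupType.

Definition gen (H : {group gT}) : gT :=
  odflt 1%g [pick x | <[x]>%g == H :> {set gT}].

Lemma genP (H : {group gT}) : cyclic H -> <[gen H]>%g = H.
Proof.
case/cyclicP => x Hx; rewrite /gen; case: pickP => [y /eqP //|/(_ x)].
by rewrite Hx eqxx.
Qed.

Lemma decomp_counts (G : {group gT}) s :
  canonical_decomposition G s ->
  exists b : seq gT, (\big[dprod/1]_(x <- b) <[x]>)%g = G /\
     num_summands s 2 = count (fun x => logn 2 #[x]%g == 1%N) b /\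
     num_summands s 4 = count (fun x => logn 2 #[x]%g == 2%N) b.
Proof.
case=> defG hs; exists (map gen s); split; [|split].
- rewrite big_map -defG; apply: eq_big_seq => H /hs [cH _].
  by rewrite genP.
- rewrite count_map /num_summands; apply: eq_in_count => H /hs [cH [p [k [pp cardH]]]].
  rewrite /preim /= /order genP // cardH -(pp_card_eq k pp (isT : 0 < 1)%N) expn1.
  by [].
- rewrite count_map /num_summands; apply: eq_in_count => H /hs [cH [p [k [pp cardH]]]].
  rewrite /preim /= /order genP // cardH -(pp_card_eq k pp (isT : 0 < 2)%N).
  by [].
Qed.
End B.


Section Grp.
Variables (gT : finGroupType) (G : {group gT}) (phi : 'cV[int]_2 -> gT).
Variables (L : 'M[int]_2) (d0 d1 : int).
Hypothesis phiM : forall u v, phi (u + v)%R = (phi u * phi v)%g.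
Hypothesis phiG : forall u, phi u \in G.
Hypothesis phiS : forall x, x \in G -> exists u, phi u = x.
Hypothesis Lu : L \in unitmx.
Hypothesis ker : forall z, phi (L *m z)%R = 1%g <->
   (d0 %| z ord0 ord0)%Z /\ (d1 %| z ord_max ord0)%Z.

Lemma phi0 : phi 0%R = 1%g.
Proof.
have := phiM 0 0; rewrite addr0 => h.
by apply: (mulgI (phi 0)); rewrite -h mulg1.
Qed.

Lemma phiN w : phi (- w)%R = (phi w)^-1%g.
Proof.
apply/eqP; rewrite eq_sym eq_invg_mul -phiM addrN phi0 //.
Qed.

Lemma phiMn w n : phi (n%:Z *: w)%R = (phi w ^+ n)%g.
Proof.
elim: n => [|n IH]; first by rewrite scale0r phi0.
by rewrite -[n.+1]addn1 PoszD scalerDl scale1r phiM IH addn1 expgSr.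
Qed.

Lemma phiZ (c : int) w : phi (c *: w)%R \in <[phi w]>%g.
Proof.
case: c => n; first by rewrite phiMn mem_cycle.
by rewrite NegzE scaleNr phiN phiMn groupV mem_cycle.
Qed.

Lemma phi_comm p q : commute (phi p) (phi q).
Proof. by rewrite /commute -!phiM addrC. Qed.

Definition e0 : 'cV[int]_2 := delta_mx ord0 ord0.
Definition e1 : 'cV[int]_2 := delta_mx ord_max ord0.
Definition uu := phi (L *m e0)%R.
Definition vv := phi (L *m e1)%R.

Lemma uu_pow n : (uu ^+ n = 1)%g <-> (`|d0| %| n)%N.
Proof.
rewrite /uu -phiMn scalemxAr ker !mxE /= mulr1 mulr0 dvdz0 dvdzE /=.
by split=> [[]|].
Qed.

Lemma vv_pow n : (vv ^+ n = 1)%g <-> (`|d1| %| n)%N.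
Proof.
rewrite /vv -phiMn scalemxAr ker !mxE /= mulr1 mulr0 dvdz0 dvdzE /=.
by split=> [[]|].
Qed.

Lemma ord_uu : #[uu]%g = `|d0|%N.
Proof.
apply/eqP; rewrite eqn_dvd order_dvdn; apply/andP; split.
  by apply/eqP/uu_pow.
by apply/uu_pow/eqP; rewrite -order_dvdn.
Qed.

Lemma ord_vv : #[vv]%g = `|d1|%N.
Proof.
apply/eqP; rewrite eqn_dvd order_dvdn; apply/andP; split.
  by apply/eqP/vv_pow.
by apply/vv_pow/eqP; rewrite -order_dvdn.
Qed.

Lemma decomp_uv : (<[uu]> \x <[vv]>)%g = G.
Proof.
rewrite dprodE.
- apply/eqP; rewrite eqEsubset mulG_subG !cycle_subG !phiG /=.
  apply/subsetP => x /phiS [w <-].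
  have -> : w = (L *m (invmx L *m w))%R by rewrite mulKVmx.
  move: (invmx L *m w)%R => z.
  have -> : z = (z ord0 ord0 *: e0 + z ord_max ord0 *: e1)%R.
    apply/matrixP => i j; rewrite [j]ord1 !mxE.
    case: i => [[|[|//]] ?] /=; rewrite /= ?mulr1 ?mulr0 ?addr0 ?add0r;
      by congr (z _ _); apply: val_inj.
  rewrite mulmxDr phiM -!scalemxAr.
  by apply: mem_mulg; apply: phiZ.
- apply/centsP => x /cycleP [i ->] y /cycleP [j ->].
  by apply: commuteX2; apply: phi_comm.
- apply/trivgP/subsetP => y /setIP [/cycleP [i ->] /cycleP [j hj]].
  suff: (uu ^+ i = 1)%g by move=> ->; apply: group1.
  apply/uu_pow.
  have : phi (L *m (i%:Z *: e0 - j%:Z *: e1))%R = 1%g.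
    by rewrite mulmxBr phiM phiN -!scalemxAr !phiMn -/uu -/vv hj mulgV.
  case/ker => + _; rewrite !mxE /= mulr1 mulr0 subr0 dvdzE //.
Qed.
End Grp.


Lemma odd_sq8 A : odd A -> (A ^ 2 %% 8 = 1)%N.
Proof.
move=> oA; rewrite -modnXm.
have : odd (A %% 8).
  by rewrite (odd_mod A (erefl false : odd 8 = false)).
have : (A %% 8 < 8)%N by rewrite ltn_pmod.
by case: (A %% 8) => [|[|[|[|[|[|[|[|]]]]]]]].
Qed.

Lemma delta_cases (A B d : nat) : (~~ (2 %| A)%N || ~~ (2 %| B)%N) ->
  (d + B ^ 2 = A ^ 2 \/ d + A ^ 2 = B ^ 2)%N -> odd d \/ (8 %| d)%N.
Proof.
move=> hAB hd.
case oA : (odd A); case oB : (odd B).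
- right; have h1 := odd_sq8 oA; have h2 := odd_sq8 oB.
  move: hd h1 h2; move: (A ^ 2)%N (B ^ 2)%N => X Y; rewrite /dvdn; move=> *. apply/eqP; lia.
- left; case: hd => h; move: (congr1 odd h); rewrite oddD !oddX oA oB;
  by case: (odd d).
- left; case: hd => h; move: (congr1 odd h); rewrite oddD !oddX oA oB;
  by case: (odd d).
- by move: hAB; rewrite !dvdn2 oA oB.
Qed.

Lemma final_nat (n0 d : nat) : (0 < n0)%N -> (0 < d)%N -> odd d \/ (8 %| d)%N ->
  (16 %| n0 * d)%N \/
  (~~ odd ((logn 2 n0 == 1%N) + (logn 2 (n0 * d) == 1%N)) /\
   ~~ odd ((logn 2 n0 == 2%N) + (logn 2 (n0 * d) == 2%N))).
Proof.
move=> n0p dp hd; rewrite lognM //.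
have -> : (16 = 2 ^ 4)%N by [].
rewrite pfactor_dvdn ?muln_gt0 ?n0p ?dp // lognM //.
case: hd => [od|d8].
  have -> : logn 2 d = 0%N by apply: logn_coprime; rewrite coprime2n.
  by right; rewrite addn0 !addnn !odd_double.
have : (3 <= logn 2 d)%N by rewrite -pfactor_dvdn.
case: (leqP 4 (logn 2 n0 + logn 2 d)) => h1 h2; first by left.
right; have e0 : logn 2 n0 = 0%N by lia.
have e3 : logn 2 d = 3%N by lia.
by rewrite e0 e3.
Qed.


Lemma ord2_ind (P : 'I_2 -> Prop) : P ord0 -> P ord_max -> forall i, P i.
Proof.
move=> h0 h1 [[|[|//]] hi].
  by have -> : Ordinal hi = ord0 by apply: val_inj.
by have -> : Ordinal hi = ord_max by apply: val_inj.
Qed.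

Section Det.
Local Open Scope ring_scope.
Lemma det2 (A : 'M[int]_2) : \det A = (A ord0 ord0 * A ord_max ord_max - A ord0 ord_max * A ord_max ord0)%R.
Proof.
rewrite (expand_det_row _ ord0) !big_ord_recl big_ord0 /cofactor !det_mx11 !mxE /=.
have -> : lift ord0 (0 : 'I_1) = ord_max :> 'I_2 by apply: val_inj.
have -> : lift (ord_max : 'I_2) (0 : 'I_1) = ord0 :> 'I_2 by apply: val_inj.
by rewrite /bump /= expr0 expr1 mul1r addr0 mulN1r mulrN.
Qed.
End Det.

Lemma absz_sub (X Y : int) : (0 <= X)%R -> (0 <= Y)%R ->
  (`|(X - Y)%R| + `|Y| = `|X| \/ `|(X - Y)%R| + `|X| = `|Y|)%N.
Proof. lia. Qed.

Lemma count_eq_dprod gT (G : {group gT}) (b1 b2 : seq gT) j :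
  (\big[dprod/1]_(x <- b1) <[x]>)%g = G ->
  (\big[dprod/1]_(x <- b2) <[x]>)%g = G ->
  count (fun x => logn 2 #[x]%g == j.+1) b1 = count (fun x => logn 2 #[x]%g == j.+1) b2.
Proof.
move=> h1 h2.
have e1 := count_eqS (fun x => logn 2 #[x]%g) j b1.
have e2 := count_eqS (fun x => logn 2 #[x]%g) j b2.
have c1 : count (fun x => j < logn 2 #[x]%g) b1 = _ := count_logn_dprod_cycle 2 j h1.
have c2 : count (fun x => j < logn 2 #[x]%g) b2 = _ := count_logn_dprod_cycle 2 j h2.
have c3 : count (fun x => j.+1 < logn 2 #[x]%g) b1 = _ := count_logn_dprod_cycle 2 j.+1 h1.
have c4 : count (fun x => j.+1 < logn 2 #[x]%g) b2 = _ := count_logn_dprod_cycle 2 j.+1 h2.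
lia.
Qed.

Theorem mainTheorem9 (a b : int) (gT : finGroupType) (G : {group gT})
    (s : seq {group gT}) :
  (a ^+ 2 - b ^+ 2 != 0)%R ->
  presented_by (Mab a b) G ->
  canonical_decomposition G s ->
  (exists2 x, x \in G & #[x]%g = 16) \/
  (~~ odd (num_summands s 2) /\ ~~ odd (num_summands s 4)).
Proof.
move=> hdet [phi [phiM phiG phiS phiK]] hcan.
have [L Lu [R Ru [d sd defM]]] := int_Smith_normal_form (Mab a b).
set D := (\matrix_(i, j) _)%R in defM.
set d0 := nth 0%R d 0; set d1 := nth 0%R d 1.
have Dmul : forall (y : 'cV[int]_2) (i : 'I_2), (D *m y)%R i ord0 = (d`_i * y i ord0)%R.
  by move=> y [[|[|m]] hi] //; rewrite mxE !big_ord_recl big_ord0 !mxE /= ?mulr1n ?mulr0n ?mul0r ?add0r ?addr0;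
    congr (_ * y _ _)%R; apply: val_inj.
have ker : forall z : 'cV[int]_2, phi (L *m z)%R = 1%g <->
    (d0 %| z ord0 ord0)%Z /\ (d1 %| z ord_max ord0)%Z.
  move=> z; split.
  - case/phiK => y; rewrite defM -!mulmxA => /(congr1 (mulmx (invmx L))).
    rewrite !mulKmx // => ->.
    by rewrite !Dmul; split; apply: dvdz_mulr; apply: dvdzz.
  - case=> h0 h1; apply/phiK; exists (invmx R *m \col_i ((z i ord0) %/ d`_i)%Z)%R.
    rewrite defM -!mulmxA mulKVmx //; congr (L *m _)%R.
    apply/matrixP => i j; rewrite [j]ord1 Dmul mxE mulrC divzK //.
    case: i => [[|[|m]] hi] //.
      by rewrite (_ : Ordinal hi = ord0) //; apply: val_inj.
    by rewrite (_ : Ordinal hi = ord_max) //; apply: val_inj.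
have duv := decomp_uv phiM phiG phiS Lu ker.
have ou := ord_uu phiM ker.
have ov := ord_vv phiM ker.
have d01 : (d0 %| d1)%Z.
  by move: sd; rewrite /d0 /d1; case: (d) => [|x [|y t]] //=; rewrite ?dvdz0 // => /andP[].
have detM : (\det (Mab a b))%R = (a ^+ 2 - b ^+ 2)%R.
  by rewrite det2 /Mab !mxE /= !expr2.
have detD : (\det D)%R = (d0 * d1)%R.
  by rewrite det2 !mxE /= mulr1n mulr0n mul0r subr0.
have uL : `|(\det L)%R|%N = 1%N by apply: unit_int; rewrite -unitmxE.
have uR : `|(\det R)%R|%N = 1%N by apply: unit_int; rewrite -unitmxE.
have hab : `|(a ^+ 2 - b ^+ 2)%R|%N = (`|d0| * `|d1|)%N.
  by rewrite -detM defM !det_mulmx !abszM detD abszM uL uR mul1n muln1.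
have n0p : (0 < `|d0|)%N.
  rewrite absz_gt0; apply/eqP => h0; move: hab; rewrite h0 /= mul0n => /eqP.
  by rewrite absz_eq0 (negbTE hdet).
have n1p : (0 < `|d1|)%N.
  rewrite absz_gt0; apply/eqP => h0; move: hab; rewrite h0 /= muln0 => /eqP.
  by rewrite absz_eq0 (negbTE hdet).
set N := (\matrix_(i, j) ((d`_i %/ d0)%Z *+ (i == j :> nat)))%R : 'M[int]_2.
have DN : D = (d0 *: N)%R.
  apply/matrixP => i j; rewrite !mxE mulrnAr; congr (_ *+ _)%R.
  rewrite mulrC divzK //.
  by case: i => [[|[|m]] hi] //=; rewrite dvdzz.
have MP : Mab a b = (d0 *: (L *m N *m R))%R by rewrite defM DN -scalemxAr -scalemxAl.
set P := (L *m N *m R)%R in MP; clearbody P.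
pose al : int := P ord0 ord0; pose be : int := P ord0 ord_max.
have ha : a = (d0 * al)%R.
  by have := congr1 (fun M : 'M[int]_2 => M ord0 ord0) MP; rewrite /= /Mab !mxE.
have hb : b = (d0 * be)%R.
  by have := congr1 (fun M : 'M[int]_2 => M ord0 ord_max) MP; rewrite /= /Mab !mxE.
have d0n : d0 != 0%R by rewrite -absz_gt0.
have nbe : ~~ (2 %| al)%Z || ~~ (2 %| be)%Z.
  rewrite -negb_and; apply/negP => /andP [h2a h2b].
  have [al' ea] : exists al', al = (al' * 2)%R by exists (al %/ 2)%Z; rewrite divzK.
  have [be' eb] : exists be', be = (be' * 2)%R by exists (be %/ 2)%Z; rewrite divzK.
  have M2 : Mab a b = ((2 * d0) *: Mab al' be')%R.
    apply/matrixP => i j; rewrite !mxE; case: (i == j).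
      by rewrite ha ea; ring.
    by rewrite hb eb; ring.
  have DM : D = (invmx L *m Mab a b *m invmx R)%R.
    by rewrite defM !mulmxA mulVmx // mul1mx mulmxK.
  have := congr1 (fun M : 'M[int]_2 => M ord0 ord0) DM.
  rewrite /= M2 -scalemxAr -scalemxAl !mxE /= mulr1n.
  move: (\sum_(j < 2) _)%R => t ht.
  have ht' : d0 = (2 * d0 * t)%R := ht.
  have : (d0 * (1 - 2 * t))%R = 0%R by rewrite mulrBr mulr1 {1}ht'; ring.
  move/eqP; rewrite mulf_eq0 (negbTE d0n) /=; lia.
have hsq : (a ^+ 2 - b ^+ 2 = d0 ^+ 2 * (al ^+ 2 - be ^+ 2))%R.
  by rewrite ha hb; ring.
have hd : (`|(al ^+ 2 - be ^+ 2)%R| + `|be| ^ 2 = `|al| ^ 2 \/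
           `|(al ^+ 2 - be ^+ 2)%R| + `|al| ^ 2 = `|be| ^ 2)%N.
  by rewrite -!abszX; apply: absz_sub; apply: sqr_ge0.
have hAB : ~~ (2 %| `|al|)%N || ~~ (2 %| `|be|)%N by move: nbe; rewrite !dvdzE.
have dc := delta_cases hAB hd.
move: hd dc; set dl := `|(al ^+ 2 - be ^+ 2)%R|%N => _ dc.
have n1e : `|d1|%N = (`|d0| * dl)%N.
  have : (`|d0| * `|d1| = `|d0| * (`|d0| * dl))%N.
    by rewrite -hab hsq abszM abszX -mulnn mulnA.
  by move/eqP; rewrite eqn_pmul2l // => /eqP.
have dlp : (0 < dl)%N by move: n1p; rewrite n1e muln_gt0 => /andP[].
have [h16|[p1 p2]] := final_nat n0p dlp dc.
  left; exists (vv phi L ^+ (#[vv phi L] %/ 16))%g.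
    by rewrite groupX // /vv phiG.
  have hv16 : (16 %| #[vv phi L]%g)%N by rewrite ov n1e.
  rewrite orderXdiv ?dvdn_div // ov n1e.
  move: h16 => /dvdnP [k hk]; rewrite hk.
  have kp : (0 < k)%N by move: (muln_gt0 `|d0| dl); rewrite n0p dlp hk muln_gt0 => /andP[].
  by rewrite mulnK // mulKn.
right; have [bs [dbs [e2 e4]]] := decomp_counts hcan.
rewrite e2 e4.
have duv' : (\big[dprod/1]_(x <- [:: uu phi L; vv phi L]) <[x]>)%g = G.
  by rewrite !big_cons big_nil dprodg1.
rewrite (count_eq_dprod 0 dbs duv') (count_eq_dprod 1 dbs duv') /= ou ov n1e !addn0.
by split.
Qed.
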